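(* Let $g_1,g_2$ be monic divisors of $x^m-1$ over $\mathbb{F}_q$ and $v\in\mathcal{R}$ with $\gcd(v^2-1,x^m-1)=1$, and let $\mathcal{D}_3$ be the QC code of length $2m$ generated by $(g_1,vg_1)$ and $(vg_2,g_2)$. Then $\mathcal{D}_3$ is symplectic dual-containing iff $g_1\mid g_1^{\perp}(v-\overline{v})$, $g_2\mid g_1^{\perp}(1-\overline{v}v)$ and $g_2\mid g_2^{\perp}(\overline{v}-v)$.
   Context: $\mathcal{R}=\mathbb{F}_q[x]/(x^m-1)$, elements identified with representatives of degree $<m$; $[k]=(k_0,\dots,k_{m-1})$; $\overline{k}(x)=k(x^{-1})\bmod(x^m-1)$; $f^*(x)=x^{\deg f}f(1/x)$; for $k\in\mathcal{R}$, $f=\frac{x^m-1}{\gcd(k,x^m-1)}$, $k^{\perp}=f(0)^{-1}f^*$. ''$g\mid a$'' for $g\mid x^m-1$ means $g$ divides the representative of $a$. The QC code generated by $(u_{i1},u_{i2})$, $i=1,2$, is $\{([r_1u_{11}+r_2u_{21}],[r_1u_{12}+r_2u_{22}]):r_i\in\mathcal{R}\}\subseteq\mathbb{F}_q^{2m}$. Symplectic inner product $\sum_{i=1}^m(u_iv_{m+i}-u_{m+i}v_i)$; dual-containing means $\mathcal{D}_3^{\perp_S}\subseteq\mathcal{D}_3$. *)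

(* Defs.v *)
From HB Require Import structures.
From mathcomp Require Import all_boot all_order all_algebra all_field.
Set Implicit Arguments. Unset Strict Implicit. Unset Printing Implicit Defensive.
Import GRing.Theory.
Local Open Scope ring_scope.

(* R = F[x]/(x^m - 1); elements are represented by polynomials, and an
   element is identified with its representative of degree < m, i.e. p %% (x^m-1). *)
Section QC.
Variables (F : fieldType) (m : nat).

Definition xm1 : {poly F} := 'X^m - 1.

Definition rrep (p : {poly F}) : {poly F} := p %% xm1.

Definition coefvec (k : {poly F}) : 'rV[F]_m := \row_(i < m) (rrep k)`_i.

(* conjugation: kbar(x) = k(x^{-1}) mod (x^m - 1) *)
Definition rconj (k : {poly F}) : {poly F} :=
  \poly_(i < m) (rrep k)`_((m - i) %% m).

Definition recip (f : {poly F}) : {poly F} :=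
  \poly_(i < size f) f`_(size f - 1 - i).

Definition rperp (k : {poly F}) : {poly F} :=
  let f := xm1 %/ gcdp (rrep k) xm1 in (f`_0)^-1 *: recip f.

Definition rdvd (g a : {poly F}) : bool := g %| rrep a.

Definition symp (u w : 'rV[F]_m * 'rV[F]_m) : F :=
  \sum_(i < m) (u.1 0 i * w.2 0 i - u.2 0 i * w.1 0 i).

Definition qc_code (u11 u12 u21 u22 : {poly F}) (c : 'rV[F]_m * 'rV[F]_m) : Prop :=
  exists r1 r2 : {poly F},
    c = (coefvec (r1 * u11 + r2 * u21), coefvec (r1 * u12 + r2 * u22)).

Definition symp_dual (C : 'rV[F]_m * 'rV[F]_m -> Prop) (w : 'rV[F]_m * 'rV[F]_m) : Prop :=
  forall c, C c -> symp c w = 0.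

Definition symp_dual_containing (C : 'rV[F]_m * 'rV[F]_m -> Prop) : Prop :=
  forall w, symp_dual C w -> C w.

End QC.

(* Main.v *)
Require Import Defs.
From HB Require Import structures.
From mathcomp Require Import all_boot all_order all_algebra.
From mathcomp Require Import ring zify.
From Stdlib Require Import Lia.
Import GRing.Theory.
Local Open Scope ring_scope.

Section QC.
Variables (F : fieldType) (m : nat).
Hypothesis m_gt0 : (0 < m)%N.

Local Notation M := (xm1 F m).
Local Notation Q := {poly %/ M}.
Local Notation iq := (in_qpoly M).

Lemma sizeM : size M = m.+1.
Proof. by rewrite /xm1 size_Xn_sub_1. Qed.
Lemma monicM : M \is monic.
Proof. by rewrite /xm1 monic_Xn_sub_1. Qed.
Lemma M_neq0 : M != 0.
Proof. by rewrite -size_poly_gt0 sizeM. Qed.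
Lemma mkM : mk_monic M = M.
Proof. by rewrite /mk_monic sizeM monicM ltnS m_gt0. Qed.

Lemma val_iq (p : {poly F}) : (iq p : {poly F}) = rrep m p.
Proof. by rewrite /rrep /= mkM (Pdiv.IdomainMonic.modpE monicM). Qed.

Lemma val_iqE (p : {poly F}) : val (iq p) = rrep m p.
Proof. exact: val_iq. Qed.

Lemma size_val (x : Q) : (size (val x) <= m)%N.
Proof.
have h : ((size (mk_monic M)).-1 <= m)%N by rewrite mkM sizeM.
exact: (leq_trans (size_npoly x) h).
Qed.

Lemma rrep_small (p : {poly F}) : (size p <= m)%N -> rrep m p = p.
Proof. by move=> h; rewrite /rrep modp_small // sizeM ltnS. Qed.

Lemma iq_val (x : Q) : iq (val x) = x.
Proof. apply: val_inj; apply: etrans (val_iq _) _; exact: rrep_small (size_val x). Qed.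

Lemma iqM : iq M = 0.
Proof. by apply: val_inj; rewrite val_iqE /rrep modpp. Qed.

Lemma iq_eq (p q : {poly F}) : (iq p = iq q) <-> (rrep m p = rrep m q).
Proof. split=> [h|h]; first by rewrite -!val_iq h. apply: val_inj; exact: (etrans (val_iq p) (etrans h (esym (val_iq q)))). Qed.


Lemma ar_fE (i : nat) : (i < m)%N -> ((m - i) %% m = if i == 0 then 0 else m - i)%N.
Proof.
move=> im; case: eqP => [->|/eqP i0]; first by rewrite subn0 modnn.
by rewrite modn_small //; lia.
Qed.

Lemma ar1 (i j : nat) : (i < m)%N -> (j < m)%N -> (((m - i) %% m == j) = (i == (m - j) %% m))%N.
Proof.
move=> im jm; rewrite !ar_fE //.
case: (i =P 0%N) => [->|/eqP i0]; case: (j =P 0%N) => [->|/eqP j0] //=; apply/eqP/eqP; lia.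
Qed.

Lemma ar2 (i : nat) : (i < m)%N -> ((m - i) %% m = ((m - 1) * i) %% m)%N.
Proof.
move=> im; rewrite ar_fE //; case: eqP => [->|/eqP i0]; first by rewrite muln0 mod0n.
have -> : ((m - 1) * i = (i - 1) * m + (m - i))%N by nia.
by rewrite modnMDl modn_small //; lia.
Qed.

Lemma ar3 (i : nat) : (((m - 1) * ((m - 1) * i)) %% m = i %% m)%N.
Proof.
case: (m =P 1%N) => [->|/eqP m1]; first by rewrite !modn1.
have [n hn] : exists n, m = n.+2 by exists (m - 2)%N; lia.
rewrite hn subn1 /=.
have -> : (n.+1 * (n.+1 * i) = (n * i) * n.+2 + i)%N by nia.
by rewrite modnMDl.
Qed.

Lemma ar4 (i k : nat) : (i < m)%N -> (k < m)%N -> (((i + (m - 1) * k) %% m == 0) = (i == k))%N.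
Proof.
move=> im km; case: (ltngtP i k) => [ik|ki|->].
- have -> : (i + (m - 1) * k = (k - 1) * m + (m - (k - i)))%N by nia.
  rewrite modnMDl modn_small; last by lia.
  apply/eqP/eqP; lia.
- have -> : (i + (m - 1) * k = k * m + (i - k))%N by nia.
  rewrite modnMDl modn_small; last by lia.
  apply/eqP/eqP; lia.
- have -> : (k + (m - 1) * k = k * m + 0)%N by nia.
  by rewrite modnMDl mod0n eqxx.
Qed.

Lemma poly_expand {p : {poly F}} {n : nat} : (size p <= n)%N ->
  p = \sum_(i < n) p`_i *: 'X^i.
Proof.
move=> sp; rewrite -poly_def; apply/polyP => j; rewrite coef_poly.
by case: ltnP => // h; rewrite nth_default // (leq_trans sp h).
Qed.

Definition X : Q := iq 'X.

Lemma iq_sum n (f : 'I_n -> {poly F}) : iq (\sum_(i < n) f i) = \sum_(i < n) iq (f i).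
Proof. exact: raddf_sum. Qed.


Lemma iqXn n : iq 'X^n = X ^+ n.
Proof. by rewrite rmorphXn. Qed.

Lemma Xm : X ^+ m = 1.
Proof.
rewrite -iqXn; have -> : ('X^m : {poly F}) = M + 1 by rewrite /xm1 subrK.
by rewrite in_qpolyD iqM add0r in_qpoly1.
Qed.

Lemma Xmod n : X ^+ n = X ^+ (n %% m)%N.
Proof. by rewrite {1}(divn_eq n m) exprD mulnC exprM Xm expr1n mul1r. Qed.

Lemma val_Xn n : (n < m)%N -> val (X ^+ n) = 'X^n.
Proof. by move=> nm; rewrite -iqXn val_iqE rrep_small // size_polyXn. Qed.

Lemma coef0_valX n : (val (X ^+ n))`_0 = ((n %% m == 0)%N)%:R.
Proof. by rewrite Xmod val_Xn ?ltn_pmod // coefXn eq_sym. Qed.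

Lemma expandQ (x : Q) : x = \sum_(i < m) (val x)`_i *: X ^+ i.
Proof.
rewrite -{1}(iq_val x) {1}(poly_expand (size_val x)) iq_sum.
by apply: eq_bigr => i _; rewrite in_qpolyZ iqXn.
Qed.

Lemma rconjE (p : {poly F}) :
  rconj m p = \sum_(i < m) (rrep m p)`_i *: 'X^((m - i) %% m).
Proof.
apply/polyP => j; rewrite coef_poly coef_sumMXn.
case: ltnP => jm.
  rewrite (big_pred1 (Ordinal (ltn_pmod (m - j) m_gt0))) // => i /=.
  by rewrite ar1.
rewrite big_pred0 // => i; apply/negbTE; rewrite neq_ltn.
by rewrite (leq_trans (ltn_pmod _ m_gt0) jm).
Qed.

Definition ev : {poly F} -> Q := horner_alg (X ^+ (m - 1)).

Lemma evD (p q : {poly F}) : ev (p + q) = ev p + ev q.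
Proof. by rewrite /ev rmorphD. Qed.
Lemma evB (p q : {poly F}) : ev (p - q) = ev p - ev q.
Proof. by rewrite /ev rmorphB. Qed.
Lemma evM' (p q : {poly F}) : ev (p * q) = ev p * ev q.
Proof. by rewrite /ev rmorphM. Qed.
Lemma ev1 : ev 1 = 1.
Proof. by rewrite /ev rmorph1. Qed.
Lemma evZ c (p : {poly F}) : ev (c *: p) = c *: ev p.
Proof. by rewrite /ev linearZ /= mulr_algl. Qed.
Lemma ev_sum n (f : 'I_n -> {poly F}) : ev (\sum_(i < n) f i) = \sum_(i < n) ev (f i).
Proof. by rewrite /ev raddf_sum. Qed.

Lemma evXn n : ev 'X^n = X ^+ ((m - 1) * n).
Proof. by rewrite /ev rmorphXn /= horner_algX exprM. Qed.

Lemma evM : ev M = 0.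
Proof.
by rewrite /xm1 evB ev1 evXn mulnC exprM Xm expr1n subrr.
Qed.

Lemma ev_rrep (p : {poly F}) : ev (rrep m p) = ev p.
Proof.
by rewrite {2}(divp_eq p M) evD evM' evM mulr0 add0r.
Qed.

Definition Kq (x : Q) : Q := iq (rconj m (val x)).

Lemma rconj_rrep (p : {poly F}) : rconj m (rrep m p) = rconj m p.
Proof. by rewrite /rconj /rrep modp_id. Qed.

Lemma Kq_iq (p : {poly F}) : Kq (iq p) = ev p.
Proof.
rewrite /Kq val_iqE rconj_rrep rconjE iq_sum -ev_rrep.
have hs : (size (rrep m p) <= m)%N by rewrite -val_iqE size_val.
rewrite [X in ev X](poly_expand hs) ev_sum; apply: eq_bigr => i _.
by rewrite in_qpolyZ evZ iqXn evXn (Xmod ((m - i) %% m)) (Xmod ((m - 1) * i)) modn_mod ar2.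
Qed.

Lemma KqE x : Kq x = ev (val x).
Proof. by rewrite -{1}(iq_val x) Kq_iq. Qed.

Lemma valZ (x : Q) c : val (c *: x) = c *: val x.
Proof. by rewrite linearZ. Qed.
Lemma valB (x y : Q) : val (x - y) = val x - val y.
Proof. by rewrite raddfB. Qed.
Lemma valD (x y : Q) : val (x + y) = val x + val y.
Proof. by rewrite raddfD. Qed.
Lemma val_sum n (f : 'I_n -> Q) : val (\sum_(i < n) f i) = \sum_(i < n) val (f i).
Proof. by rewrite raddf_sum. Qed.

Lemma KqD x y : Kq (x + y) = Kq x + Kq y.
Proof. by rewrite !KqE valD evD. Qed.
Lemma KqB x y : Kq (x - y) = Kq x - Kq y.
Proof. by rewrite !KqE valB evB. Qed.
Lemma Kq0 : Kq 0 = 0.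
Proof. by have := KqB 0 0; rewrite subrr => ->; rewrite subrr. Qed.
Lemma KqM x y : Kq (x * y) = Kq x * Kq y.
Proof.
have -> : x * y = iq (val x * val y) by rewrite in_qpolyM !iq_val.
by rewrite Kq_iq evM' -!KqE.
Qed.
Lemma Kq1 : Kq 1 = 1.
Proof. by rewrite -[in LHS](in_qpoly1 M) Kq_iq ev1. Qed.
Lemma KqZ c x : Kq (c *: x) = c *: Kq x.
Proof. by rewrite !KqE valZ evZ. Qed.
Lemma Kq_sum n (f : 'I_n -> Q) : Kq (\sum_(i < n) f i) = \sum_(i < n) Kq (f i).
Proof. exact: (big_morph _ KqD Kq0). Qed.
Lemma KqXn n : Kq (X ^+ n) = X ^+ ((m - 1) * n).
Proof. by rewrite -iqXn Kq_iq evXn. Qed.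

Lemma Kq_ev (p : {poly F}) : Kq (ev p) = iq p.
Proof.
rewrite [X in ev X](poly_expand (leqnn (size p))) [X in iq X](poly_expand (leqnn (size p))).
rewrite ev_sum iq_sum Kq_sum; apply: eq_bigr => i _.
by rewrite evZ KqZ in_qpolyZ evXn KqXn iqXn Xmod ar3 -Xmod.
Qed.

Lemma KqK x : Kq (Kq x) = x.
Proof. by rewrite [Kq x]KqE Kq_ev iq_val. Qed.

Lemma Kq_inj : injective Kq.
Proof. by move=> x y h; rewrite -(KqK x) h KqK. Qed.

Lemma factS (a d : Q) :
  \sum_(i < m) (val a)`_i * (val d)`_i = (val (a * Kq d))`_0.
Proof.
have -> : a * Kq d = \sum_(i < m) \sum_(k < m)
    ((val a)`_i * (val d)`_k) *: X ^+ (i + (m - 1) * k).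
  rewrite {1}(expandQ a) {1}(expandQ d) Kq_sum mulr_suml; apply: eq_bigr => i _.
  rewrite mulr_sumr; apply: eq_bigr => k _.
  by rewrite KqZ KqXn -scalerAl -scalerAr scalerA exprD.
rewrite val_sum coef_sum; apply: eq_bigr => i _.
rewrite val_sum coef_sum (bigD1 i) // big1 => [|k hk].
  by rewrite valZ coefZ coef0_valX ar4 // eqxx mulr1 /= addr0.
by rewrite valZ coefZ coef0_valX ar4 // (_ : (i == k :> nat) = false) ?mulr0 //; apply/negbTE; rewrite eq_sym; exact: hk.
Qed.

Lemma factZ (s : Q) : (forall r : Q, (val (r * s))`_0 = 0) -> s = 0.
Proof.
move=> h; have vs : val s = 0.
  apply/polyP => j; rewrite coef0; case: (ltnP j m) => jm; last first.
    by rewrite nth_default // (leq_trans (size_val s) jm).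
  have e := h (Kq (X ^+ j)); rewrite mulrC -factS in e; apply: etrans _ e.
  rewrite (bigD1 (Ordinal jm)) // val_Xn // coefXn eqxx mulr1 big1 => [|i hi].
    by rewrite /= addr0.
  by rewrite coefXn (_ : (i == j :> nat) = false) ?mulr0 //; apply/negbTE; exact: hi.
by rewrite -(iq_val s) vs in_qpoly0.
Qed.

Definition vecQ (x : Q) : 'rV[F]_m := \row_(i < m) (val x)`_i.

Lemma coefvecE (p : {poly F}) : coefvec m p = vecQ (iq p).
Proof. by rewrite /coefvec /vecQ val_iqE. Qed.

Lemma vecQ_inj : injective vecQ.
Proof.
move=> x y h; rewrite -(iq_val x) -(iq_val y); congr iq.
apply/polyP => j; case: (ltnP j m) => jm; last first.
  by rewrite !nth_default // (leq_trans (size_val _) jm).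
by have := congr1 (fun r : 'rV[F]_m => r 0 (Ordinal jm)) h; rewrite !mxE.
Qed.

Lemma vecQ_surj (r : 'rV[F]_m) : vecQ (iq (rVpoly r)) = r.
Proof.
apply/matrixP => i j; rewrite !mxE val_iqE rrep_small ?size_poly //.
by rewrite coef_rVpoly_ord (ord1 i).
Qed.

Lemma sympE (p q c d : Q) :
  symp (vecQ p, vecQ q) (vecQ c, vecQ d) = (val (p * Kq d - q * Kq c))`_0.
Proof.
rewrite valB coefB -!factS /symp /= -sumrB.
by apply: eq_bigr => i _; rewrite !mxE.
Qed.

Lemma XexpMD a k : X ^+ (a + k * m) = X ^+ a.
Proof. by rewrite exprD mulnC exprM Xm expr1n mulr1. Qed.

Lemma iq_recip (p : {poly F}) : iq (recip p) = X ^+ (size p).-1 * Kq (iq p).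
Proof.
rewrite /recip poly_def iq_sum Kq_iq [X in ev X](poly_expand (leqnn (size p))).
rewrite ev_sum mulr_sumr (reindex_inj rev_ord_inj) /=; apply: eq_bigr => j _.
rewrite in_qpolyZ iqXn evZ evXn -scalerAr -exprD.
have hj := ltn_ord j.
have -> : (size p - 1 - (size p - j.+1) = j)%N.
  by move: hj; move: (size p) (nat_of_ord j) => a b; lia.
have -> : ((size p).-1 + (m - 1) * j = (size p - j.+1) + j * m)%N.
  by move: hj m_gt0; move: (size p) (nat_of_ord j) m => a b c; nia.
by rewrite XexpMD.
Qed.

Lemma iq_rrep (p : {poly F}) : iq (rrep m p) = iq p.
Proof. by apply/iq_eq; rewrite /rrep modp_id. Qed.

Lemma iq_rconj (p : {poly F}) : iq (rconj m p) = Kq (iq p).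
Proof. by rewrite /Kq val_iqE rconj_rrep. Qed.

Definition dvdQ (a x : Q) := exists t, x = a * t.

Lemma dvdQ_mul a t : dvdQ a (a * t).
Proof. by exists t. Qed.
Lemma dvdQ_mulr a x y : dvdQ a x -> dvdQ a (x * y).
Proof. by case=> t ->; exists (t * y); rewrite mulrA. Qed.
Lemma dvdQ_mull a x y : dvdQ a x -> dvdQ a (y * x).
Proof. by move=> h; rewrite mulrC; apply: dvdQ_mulr. Qed.
Lemma dvdQ_add a x y : dvdQ a x -> dvdQ a y -> dvdQ a (x + y).
Proof. by case=> t -> [s ->]; exists (t + s); rewrite mulrDr. Qed.
Lemma dvdQ_opp a x : dvdQ a x -> dvdQ a (- x).
Proof. by case=> t ->; exists (- t); rewrite mulrN. Qed.
Lemma dvdQ_sub a x y : dvdQ a x -> dvdQ a y -> dvdQ a (x - y).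
Proof. by move=> h1 h2; apply: dvdQ_add => //; apply: dvdQ_opp. Qed.
Lemma dvdQ_unit a w w' x : w' * w = 1 -> (dvdQ a (w * x) <-> dvdQ a x).
Proof.
move=> hw; split => h; last exact: dvdQ_mull.
have := @dvdQ_mull a (w * x) w' h; by rewrite mulrA hw mul1r.
Qed.
Lemma dvdQ_K a x : dvdQ (Kq a) x <-> dvdQ a (Kq x).
Proof.
split=> [[t ->]|[t ht]]; first by exists (Kq t); rewrite KqM KqK.
by exists (Kq t); rewrite -(KqK x) ht KqM.
Qed.

Lemma dvdQ_Kr a x : dvdQ a x -> dvdQ (Kq a) (Kq x).
Proof. by move=> h; apply/dvdQ_K; rewrite KqK. Qed.

Lemma rdvdE (g p : {poly F}) : g %| M -> (rdvd m g p <-> dvdQ (iq g) (iq p)).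
Proof.
move=> gM; rewrite /rdvd; split => [h|[t ht]].
  exists (iq (rrep m p %/ g)); rewrite -in_qpolyM mulrC divpK // iq_rrep //.
have : iq p = iq (g * val t) by rewrite in_qpolyM iq_val.
move/iq_eq => ->; rewrite /rrep -dvdp_mod //; exact: dvdp_mulr.
Qed.

Lemma annQ (a b : {poly F}) (k : F) : k != 0 -> a * b = k *: M ->
  forall t : Q, iq a * t = 0 -> dvdQ (iq b) t.
Proof.
move=> k0 hab t h.
have a0 : a != 0.
  by apply/eqP => a0; move: hab; rewrite a0 mul0r => /esym/eqP; rewrite scaler_eq0 (negbTE k0) (negbTE M_neq0).
have : iq (a * val t) = iq 0 by rewrite in_qpolyM iq_val h in_qpoly0.
move/iq_eq; rewrite {2}/rrep mod0p => /modp_eq0P hM.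
have : a * b %| a * val t by rewrite hab dvdpZl.
rewrite dvdp_mul2l // => hb.
by exists (iq (val t %/ b)); rewrite -in_qpolyM mulrC divpK // iq_val.
Qed.

Lemma annQ0 (a b : {poly F}) (k : F) : a * b = k *: M -> iq a * iq b = 0.
Proof. by move=> h; rewrite -in_qpolyM h in_qpolyZ iqM scaler0. Qed.

Definition fperp (g : {poly F}) := M %/ gcdp (rrep m g) M.

Lemma fperpP (g : {poly F}) : g %| M -> exists2 k : F, k != 0 & g * fperp g = k *: M.
Proof.
move=> gM; set G := gcdp (rrep m g) M.
have GM : G %| M by apply: dvdp_gcdr.
have Gg : G %= g.
  apply: eqp_trans (gcdp_modl g M) _; exact: dvdp_gcd_idl.
case/eqpP: Gg => [[c1 c2] /andP [c10 c20] /= hc].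
exists (c1 / c2); first by rewrite mulf_neq0 // invr_eq0.
have eg : g = (c1 / c2) *: G by rewrite mulrC -scalerA hc scalerA mulVf // scale1r.
by rewrite /fperp -/G {1}eg -scalerAl divpKC.
Qed.

Lemma M0 : M`_0 = -1.
Proof. by rewrite /xm1 coefB coefXn coef1 /=; case: m m_gt0 => // n _; rewrite sub0r. Qed.

Lemma fperp0 (g : {poly F}) : g %| M -> (fperp g)`_0 != 0.
Proof.
case/fperpP => // k k0 h; apply/eqP => f0.
have := congr1 (fun p : {poly F} => p`_0) h; rewrite /= coef0M f0 mulr0 coefZ M0 => /esym/eqP.
by rewrite mulrN1 oppr_eq0 (negbTE k0).
Qed.

Lemma iq_rperp (g : {poly F}) : g %| M ->
  iq (rperp m g) = ((fperp g)`_0)^-1 *: (X ^+ (size (fperp g)).-1 * Kq (iq (fperp g))).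
Proof. by move=> gM; rewrite /rperp -/(fperp g) in_qpolyZ iq_recip. Qed.

Lemma condE (g h Y : {poly F}) : g %| M -> h %| M ->
  (rdvd m g (rperp m h * Y) <-> dvdQ (Kq (iq g)) (iq (fperp h) * Kq (iq Y))).
Proof.
move=> gM hM; rewrite rdvdE // in_qpolyM iq_rperp //.
set c := _^-1; set n := (size _).-1; set KF := Kq _.
have c0 : c != 0 by rewrite invr_eq0 fperp0.
have -> : c *: (X ^+ n * KF) * iq Y = (c *: X ^+ n) * (KF * iq Y).
  by rewrite -!scalerAl mulrA.
have hw : (c^-1 *: X ^+ ((m - 1) * n)) * (c *: X ^+ n) = 1.
  rewrite -scalerAl -scalerAr scalerA mulVf // scale1r -exprD.
  have -> : ((m - 1) * n + n = 0 + n * m)%N by nia.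
  by rewrite XexpMD expr0.
rewrite (dvdQ_unit _ _ _ _ hw) dvdQ_K KqM KqK.
have -> : iq Y = Kq (Kq (iq Y)) by rewrite KqK.
by [].
Qed.

Lemma iqB (p q : {poly F}) : iq (p - q) = iq p - iq q.
Proof. by rewrite raddfB. Qed.

Lemma qc_iqE (g1 g2 v : {poly F}) x :
  @qc_code _ m g1 (v * g1) (v * g2) g2 x <->
  exists R1 R2 : Q, x = (vecQ (R1 * iq g1 + R2 * (iq v * iq g2)),
                        vecQ (R1 * (iq v * iq g1) + R2 * iq g2)).
Proof.
split.
  case=> r1 [r2 ->]; exists (iq r1), (iq r2).
  by rewrite !coefvecE !in_qpolyD !in_qpolyM.
case=> R1 [R2 ->]; exists (val R1), (val R2).
by rewrite !coefvecE !in_qpolyD !in_qpolyM !iq_val.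
Qed.

Lemma memE (g1 g2 v : {poly F}) (c d : Q) :
  @qc_code _ m g1 (v * g1) (v * g2) g2 (vecQ c, vecQ d) <->
  exists R1 R2 : Q, c = R1 * iq g1 + R2 * (iq v * iq g2) /\
                    d = R1 * (iq v * iq g1) + R2 * iq g2.
Proof.
rewrite qc_iqE; split; case=> R1 [R2 h]; exists R1, R2.
  by case: h => /vecQ_inj -> /vecQ_inj ->.
by case: h => -> ->.
Qed.

Lemma dualE (g1 g2 v : {poly F}) (c d : Q) :
  symp_dual (@qc_code _ m g1 (v * g1) (v * g2) g2) (vecQ c, vecQ d) <->
  (iq g1 * (Kq d - iq v * Kq c) = 0 /\ iq g2 * (iq v * Kq d - Kq c) = 0).
Proof.
rewrite /symp_dual; split.
  move=> h.
  have key : forall R1 R2 : Q,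
      (val (R1 * (iq g1 * (Kq d - iq v * Kq c)) + R2 * (iq g2 * (iq v * Kq d - Kq c))))`_0 = 0.
    move=> R1 R2.
    have := h _ (proj2 (qc_iqE g1 g2 v _) (ex_intro _ R1 (ex_intro _ R2 erefl))).
    rewrite sympE => e; rewrite -[RHS]e; congr ((val _)`_0); f_equal; ring.
  split; apply: factZ => r.
    by have := key r 0; rewrite mul0r addr0.
  by have := key 0 r; rewrite mul0r add0r.
case=> e1 e2 x /qc_iqE [R1 [R2 ->]]; rewrite sympE.
have -> : (R1 * iq g1 + R2 * (iq v * iq g2)) * Kq d - (R1 * (iq v * iq g1) + R2 * iq g2) * Kq c
  = R1 * (iq g1 * (Kq d - iq v * Kq c)) + R2 * (iq g2 * (iq v * Kq d - Kq c)) by ring.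
by rewrite e1 e2 !mulr0 addr0 raddf0 coef0.
Qed.

Lemma and3_iff {A A' B B' C C' : Prop} : (A <-> A') -> (B <-> B') -> (C <-> C') ->
  ([/\ A, B & C] <-> [/\ A', B' & C']).
Proof. by move=> [a1 a2] [b1 b2] [c1 c2]; split=> -[x y z]; split; auto. Qed.

Lemma main_sec (g1 g2 v : {poly F}) : g1 %| M -> g2 %| M ->
  coprimep (rrep m (v * v - 1)) M ->
  symp_dual_containing (@qc_code _ m g1 (v * g1) (v * g2) g2) <->
  [/\ rdvd m g1 (rperp m g1 * (v - rconj m v)),
      rdvd m g2 (rperp m g1 * (1 - rconj m v * v))
    & rdvd m g2 (rperp m g2 * (rconj m v - v))].
Proof.
move=> h1 h2 hcop.
have [u hu] : exists u : Q, u * (1 - iq v * iq v) = 1.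
  pose p := iq (v * v - 1).
  have cp : coprimep (mk_monic M) p.
    by rewrite [X in coprimep X _]mkM /p val_iq coprimep_sym.
  exists (- qpoly_inv p); rewrite mulNr -mulrN.
  have -> : - (1 - iq v * iq v) = p by rewrite /p iqB in_qpolyM in_qpoly1 opprB.
  exact: qpoly_mulVz.
have [k1 k10 e1] := fperpP _ h1.
have [k2 k20 e2] := fperpP _ h2.
have e1' : fperp g1 * g1 = k1 *: M by rewrite mulrC.
have e2' : fperp g2 * g2 = k2 *: M by rewrite mulrC.
have GF1 := annQ0 _ _ _ e1.
have GF2 := annQ0 _ _ _ e2.
have ann1 := annQ _ _ _ k10 e1.
have ann2 := annQ _ _ _ k20 e2.
have ann1' := annQ _ _ _ k10 e1'.
have ann2' := annQ _ _ _ k20 e2'.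
have cE1 := condE _ _ (v - rconj m v) h1 h1.
have cE2 := condE _ _ (1 - rconj m v * v) h2 h1.
have cE3 := condE _ _ (rconj m v - v) h2 h2.
rewrite !iqB ?in_qpoly1 ?in_qpolyM !iq_rconj !KqB ?Kq1 ?KqM !KqK in cE1 cE2 cE3.
eapply iff_trans; last exact: (iff_sym (and3_iff cE1 cE2 cE3)).
clear cE1 cE2 cE3.
move: GF1 GF2 ann1 ann2 ann1' ann2'.
set G1 := iq g1; set G2 := iq g2; set F1 := iq (fperp g1); set F2 := iq (fperp g2).
set V := iq v; set V' := Kq V.
move=> GF1 GF2 ann1 ann2 ann1' ann2'.
set E := 1 - V * V in hu.
have KV' : Kq V' = V by rewrite KqK.
set W := 1 - V * V'.
have KW : Kq W = W by rewrite /W KqB Kq1 KqM KV' mulrC.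
have C24 : dvdQ (Kq G2) (F1 * W) -> dvdQ (Kq G1) (F2 * W).
  rewrite dvdQ_K KqM KW => -[s hs].
  have z : Kq F1 * W * F2 = 0 by rewrite hs mulrAC GF2 mul0r.
  have z' : F1 * (W * Kq F2) = 0.
    by have := congr1 Kq z; rewrite !KqM KqK KW Kq0 mulrA.
  have := ann1' _ z'; rewrite -(KqK (W * Kq F2)) -dvdQ_K KqM KW KqK.
  by rewrite mulrC.
split.
- move=> DC.
  have dA : symp_dual (@qc_code _ m g1 (v * g1) (v * g2) g2)
      (vecQ (Kq (u * V * F1)), vecQ (Kq (u * F1))).
    apply/dualE; rewrite !KqK -/G1 -/G2 -/V; split.
      have -> : G1 * (u * F1 - V * (u * V * F1)) = (G1 * F1) * (u * E) by rewrite /E; ring.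
      by rewrite GF1 mul0r.
    have -> : G2 * (V * (u * F1) - u * V * F1) = 0 by ring.
    by [].
  have /memE [R1 [R2 [ec ed]]] := DC _ dA.
  have dB : symp_dual (@qc_code _ m g1 (v * g1) (v * g2) g2)
      (vecQ (Kq (u * F2)), vecQ (Kq (u * V * F2))).
    apply/dualE; rewrite !KqK -/G1 -/G2 -/V; split.
      have -> : G1 * (u * V * F2 - V * (u * F2)) = 0 by ring.
      by [].
    have -> : G2 * (V * (u * V * F2) - u * F2) = - ((G2 * F2) * (u * E)) by rewrite /E; ring.
    by rewrite GF2 mul0r oppr0.
  have /memE [S1 [S2 [fc fd]]] := DC _ dB.
  rewrite -/G1 -/G2 -/V in ec ed fc fd.
  have dv1 : dvdQ G1 (Kq (u * V * F1) - V * Kq (u * F1)).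
    by rewrite ec ed; exists (R1 * E); rewrite /E; ring.
  have dv2 : dvdQ G2 (Kq (u * F1) - V * Kq (u * V * F1)).
    by rewrite ec ed; exists (R2 * E); rewrite /E; ring.
  have dv3 : dvdQ G2 (Kq (u * V * F2) - V * Kq (u * F2)).
    by rewrite fc fd; exists (S2 * E); rewrite /E; ring.
  move/dvdQ_Kr: dv1; move/dvdQ_Kr: dv2; move/dvdQ_Kr: dv3.
  rewrite !KqB !KqM !KqK -/V'.
  move=> dv3 dv2 dv1; split.
  + have := dvdQ_opp _ _ (@dvdQ_mull _ _ E dv1).
    have -> : - (E * (u * V * F1 - V' * (u * F1))) = (u * E) * (F1 * (V' - V)) by rewrite /E; ring.
    by rewrite hu mul1r.
  + have := @dvdQ_mull _ _ E dv2.
    have -> : E * (u * F1 - V' * (u * V * F1)) = (u * E) * (F1 * W) by rewrite /E /W; ring.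
    by rewrite hu mul1r.
  + have := @dvdQ_mull _ _ E dv3.
    have -> : E * (u * V * F2 - V' * (u * F2)) = (u * E) * (F2 * (V - V')) by rewrite /E; ring.
    by rewrite hu mul1r.
- case=> C1 C2 C3; have C4 := C24 C2.
  move=> w hw.
  have ew : w = (vecQ (iq (rVpoly w.1)), vecQ (iq (rVpoly w.2))).
    by rewrite !vecQ_surj; case: w {hw}.
  move: hw; rewrite ew; set c := iq (rVpoly w.1); set d := iq (rVpoly w.2).
  move=> /dualE; rewrite -/G1 -/G2 -/V; case=> z1 z2.
  have [a ha] := ann1 _ z1.
  have z2' : G2 * (Kq c - V * Kq d) = 0.
    have -> : G2 * (Kq c - V * Kq d) = - (G2 * (V * Kq d - Kq c)) by ring.
    by rewrite z2 oppr0.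
  have [b hb] := ann2 _ z2'.
  have dc : dvdQ G1 (c - V * d).
    suff h : dvdQ (Kq G1) (Kq (c - V * d)) by move/dvdQ_K: h; rewrite KqK.
    rewrite KqB KqM -/V'.
    apply: (proj1 (dvdQ_unit _ _ _ _ hu)).
    have -> : E * (Kq c - V' * Kq d) = (1 - V * V') * (Kq c - V * Kq d) + (V - V') * (Kq d - V * Kq c).
      by rewrite /E; ring.
    rewrite ha hb; apply: dvdQ_add.
      have -> : (1 - V * V') * (F2 * b) = (F2 * W) * b by rewrite /W; ring.
      by apply: dvdQ_mulr.
    have -> : (V - V') * (F1 * a) = - ((F1 * (V' - V)) * a) by ring.
    by apply/dvdQ_opp/dvdQ_mulr.
  have dd : dvdQ G2 (d - V * c).
    suff h : dvdQ (Kq G2) (Kq (d - V * c)) by move/dvdQ_K: h; rewrite KqK.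
    rewrite KqB KqM -/V'.
    apply: (proj1 (dvdQ_unit _ _ _ _ hu)).
    have -> : E * (Kq d - V' * Kq c) = (1 - V * V') * (Kq d - V * Kq c) + (V - V') * (Kq c - V * Kq d).
      by rewrite /E; ring.
    rewrite ha hb; apply: dvdQ_add.
      have -> : (1 - V * V') * (F1 * a) = (F1 * W) * a by rewrite /W; ring.
      by apply: dvdQ_mulr.
    have -> : (V - V') * (F2 * b) = (F2 * (V - V')) * b by ring.
    by apply/dvdQ_mulr.
  apply/memE; case: dc => t1 ht1; case: dd => t2 ht2.
  exists (u * t1), (u * t2); rewrite -/G1 -/G2 -/V; split.
    have -> : u * t1 * G1 + u * t2 * (V * G2) = u * (G1 * t1 + V * (G2 * t2)) by ring.
    rewrite -ht1 -ht2.
    have -> : u * (c - V * d + V * (d - V * c)) = (u * E) * c by rewrite /E; ring.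
    by rewrite hu mul1r.
  have -> : u * t1 * (V * G1) + u * t2 * G2 = u * (V * (G1 * t1) + G2 * t2) by ring.
  rewrite -ht1 -ht2.
  have -> : u * (V * (c - V * d) + (d - V * c)) = (u * E) * d by rewrite /E; ring.
  by rewrite hu mul1r.
Qed.

End QC.

Theorem mainTheorem13 (F : finFieldType) (m : nat) (g1 g2 v : {poly F}) :
  (0 < m)%N ->
  g1 \is monic -> g1 %| xm1 F m ->
  g2 \is monic -> g2 %| xm1 F m ->
  (size v <= m)%N ->
  coprimep (rrep m (v * v - 1)) (xm1 F m) ->
  symp_dual_containing (@qc_code _ m g1 (v * g1) (v * g2) g2) <->
  [/\ rdvd m g1 (rperp m g1 * (v - rconj m v)),
      rdvd m g2 (rperp m g1 * (1 - rconj m v * v))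
    & rdvd m g2 (rperp m g2 * (rconj m v - v))].
Proof.
move=> m0 _ h1 _ h2 _ hc.
exact: (@main_sec F m m0 g1 g2 v h1 h2 hc).
Qed.
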